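(* Let $\Gamma=\bigcup_i\gamma_i$ be an admissible finite collection of transverse unobstructed curves in $\Sigma$. Then every nonzero $b\in H_{\mathbb{R}}$ has both a positive and a negative coordinate in the canonical basis of $C$.
   Context: $\Sigma$ is a closed oriented surface of genus at least two; unobstructed curves are oriented immersed closed curves whose lifts to the universal cover are properly embedded lines. $C=C_2(\Sigma;\mathbb{Z})$ is the free $\mathbb{Z}$-module with basis the connected components of $\Sigma\setminus\Gamma$. The Euler measure $e(S)$ of a surface $S$ with corners is $\frac{1}{2\pi}$ times the integral of the curvature of a metric on $S$ for which the boundary is geodesic and the corners are right angles; it is additive under gluing along boundary segments, and extends to a linear form $e$ on $C$. $H\subset C$ is the subgroup of $2$-chains in $\ker e$ whose boundary is a linear combination of the curves $\gamma_i$, and $H_{\mathbb{R}}$ is its $\mathbb{R}$-span in $C_2(\Sigma;\mathbb{R})=C\otimes\mathbb{R}$. The collection $\Gamma$ is admissible iff every nonzero $b\in H$ has both positive and negative coordinates in the canonical basis of $C$. *)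

(* Defs.v *)
From HB Require Import structures.
From mathcomp Require Import all_boot all_order all_algebra.
From mathcomp Require Import reals.
Set Implicit Arguments. Unset Strict Implicit. Unset Printing Implicit Defensive.
Import Order.TTheory GRing.Theory Num.Theory.
Local Open Scope ring_scope.

(* Combinatorial data of a finite collection Gamma = U_i gamma_i of transverse
   curves in Sigma:
   - the connected components (regions) of Sigma \ Gamma, indexed by 'I_nreg;
     C = C_2(Sigma;Z) = 'rV[int]_nreg (canonical basis = regions);
   - the edges of the graph Gamma, indexed by 'I_nedge; C_1 = 'rV[int]_nedge;
   - bdry : the cellular boundary map C -> C_1, as a matrix (row j = boundary
     of region j);
   - curve i : the curve gamma_i as a 1-chain (sum of its oriented edges);
   - the Euler measure of region j is chi j - corners j / 4, where chi j is its
     Euler characteristic and corners j its number of (right-angle) corners. *)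
Record curve_data := CurveData {
  nreg : nat;
  nedge : nat;
  ncurve : nat;
  bdry : 'M[int]_(nreg, nedge);
  curve : 'I_ncurve -> 'rV[int]_nedge;
  chi : 'I_nreg -> int;
  corners : 'I_nreg -> nat
}.

Definition euler_region (G : curve_data) (j : 'I_(nreg G)) : rat :=
  (chi j)%:~R - (corners j)%:R / 4%:R.

Definition euler (G : curve_data) (b : 'rV[int]_(nreg G)) : rat :=
  \sum_j (b 0 j)%:~R * euler_region j.

Definition bd (G : curve_data) (b : 'rV[int]_(nreg G)) : 'rV[int]_(nedge G) :=
  b *m bdry G.

Definition inH (G : curve_data) (b : 'rV[int]_(nreg G)) : Prop :=
  euler b = 0 /\ exists c : 'I_(ncurve G) -> int, bd b = \sum_i c i *: curve i.

Definition admissible (G : curve_data) : Prop :=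
  forall b : 'rV[int]_(nreg G), inH b -> b != 0 ->
    (exists j, 0 < b 0 j) /\ (exists j, b 0 j < 0).

Definition inH_R (R : realType) (G : curve_data) (x : 'rV[R]_(nreg G)) : Prop :=
  exists (p : nat) (bs : 'I_p -> 'rV[int]_(nreg G)) (r : 'I_p -> R),
    (forall l, inH (bs l)) /\ x = \sum_l r l *: map_mx (fun z : int => z%:~R) (bs l).

(* Main.v *)
Require Import Defs.
From HB Require Import structures.
From mathcomp Require Import all_boot all_order all_algebra.
From mathcomp Require Import reals.
From mathcomp Require Import ring lra.
Import Order.TTheory GRing.Theory Num.Theory.
Local Open Scope ring_scope.

Lemma inH0 (G : curve_data) : inH (0 : 'rV[int]_(nreg G)).
Proof.
split.
  by rewrite /euler big1 // => j _; rewrite mxE mul0r.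
by exists (fun _ => 0); rewrite /bd mul0mx big1 // => i _; rewrite scale0r.
Qed.

Lemma inHD (G : curve_data) (a b : 'rV[int]_(nreg G)) : inH a -> inH b -> inH (a + b).
Proof.
move=> [ea [ca Ha]] [eb [cb Hb]]; split.
  rewrite /euler (eq_bigr (fun j => (a 0 j)%:~R * euler_region j + (b 0 j)%:~R * euler_region j)).
    by rewrite big_split /= -/(euler a) -/(euler b) ea eb addr0.
  by move=> j _; rewrite mxE intrD mulrDl.
exists (fun i => ca i + cb i); rewrite /bd mulmxDl -/(bd a) -/(bd b) Ha Hb -big_split /=.
by apply: eq_bigr => i _; rewrite scalerDl.
Qed.

Lemma inHZ (G : curve_data) (c : int) (a : 'rV[int]_(nreg G)) : inH a -> inH (c *: a).
Proof.
move=> [ea [ca Ha]]; split.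
  rewrite /euler (eq_bigr (fun j => c%:~R * ((a 0 j)%:~R * euler_region j))).
    by rewrite -mulr_sumr -/(euler a) ea mulr0.
  by move=> j _; rewrite mxE intrM mulrA.
exists (fun i => c * ca i); rewrite /bd -scalemxAl -/(bd a) Ha scaler_sumr.
by apply: eq_bigr => i _; rewrite scalerA.
Qed.

Lemma inH_sum (G : curve_data) p (bs : 'I_p -> 'rV[int]_(nreg G)) (c : 'I_p -> int) :
  (forall l, inH (bs l)) -> inH (\sum_l c l *: bs l).
Proof.
move=> Hb; apply: (big_ind (@inH G)); [exact: inH0| exact: inHD|].
by move=> l _; apply: inHZ.
Qed.

Lemma eps_exists (R : realType) n (x : 'rV[R]_n) :
  exists2 e : R, 0 < e & forall j, 0 < x 0 j -> e <= x 0 j.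
Proof.
suff: forall s : seq 'I_n, exists2 e : R, 0 < e & forall j, j \in s -> 0 < x 0 j -> e <= x 0 j.
  by move=> /(_ (enum 'I_n)) [e e0 He]; exists e => // j; apply: He; rewrite mem_enum.
elim=> [|a s [e e0 He]]; first by exists 1.
have [xa|xa] := ltP 0 (x 0 a).
  exists (Order.min e (x 0 a)); first by rewrite lt_min e0 xa.
  move=> j; rewrite inE => /orP[/eqP->|js] xj; rewrite ge_min ?lexx ?orbT //.
  by rewrite He.
exists e => // j; rewrite inE => /orP[/eqP->|js] xj; last exact: He.
by move: xj; rewrite ltNge xa.
Qed.

Lemma neg_coord (R : realType) (G : curve_data) :
  admissible G ->
  forall x : 'rV[R]_(nreg G), inH_R x -> x != 0 -> exists j, x 0 j < 0.
Proof.
move=> adm x [p [bs [r [Hbs xE]]]] x0.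
case: (boolP [exists j, x 0 j < 0]) => [/existsP //|/existsPn Hn].
exfalso.
have xge : forall j, 0 <= x 0 j by move=> j; rewrite leNgt Hn.
have xj : forall j, x 0 j = \sum_l r l * (bs l 0 j)%:~R.
  by move=> j; rewrite xE summxE; apply: eq_bigr => l _; rewrite !mxE.
have [j0 xj0] : exists j0, 0 < x 0 j0.
  case: (boolP [exists j, 0 < x 0 j]) => [/existsP //|/existsPn Hp].
  move/negP: x0; case; apply/eqP/rowP => j; rewrite mxE; apply/eqP.
  by rewrite eq_le xge andbT leNgt Hp.
pose W : 'M[rat]_(p, nreg G) := \matrix_(l, j) (bs l 0 j)%:~R.
pose A : 'M[rat]_(p, nreg G) := \matrix_(l, j) if x 0 j == 0 then W l j else 0.
pose rv : 'rV[R]_p := \row_l r l.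
have rvA : rv *m map_mx ratr A = 0.
  apply/rowP => j; rewrite !mxE.
  under eq_bigr => l _ do rewrite !mxE.
  case: eqP => [xj0'|_].
    by rewrite -[RHS]xj0' xj; apply: eq_bigr => l _; rewrite ratr_int.
  by rewrite big1 // => l _; rewrite rmorph0 mulr0.
have : (rv <= kermx (map_mx ratr A))%MS by apply/sub_kermxP.
rewrite -(map_kermx (ratr : {rmorphism rat -> R})) => /submxP [u rvE].
pose K := kermx A.
pose M : 'M[R]_(p, nreg G) := map_mx ratr K *m map_mx ratr W.
have xM : forall j, x 0 j = (u *m M) 0 j.
  move=> j; rewrite mulmxA -rvE xj mxE; apply: eq_bigr => l _.
  by rewrite !mxE ratr_int.
have [e e0 He] := @eps_exists R _ x.
pose S : R := 1 + \sum_i \sum_j `|M i j|.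
have S0 : 0 < S.
  rewrite /S; apply: (lt_le_trans ltr01); rewrite lerDl sumr_ge0 // => i _.
  by rewrite sumr_ge0.
pose d := e / S.
have d0 : 0 < d by rewrite divr_gt0.
have [u' Hu'] : exists u' : 'I_p -> rat, forall i, `|u 0 i - ratr (u' i)| < d.
  suff HH : forall i : 'I_p, exists q : rat, `|u 0 i - ratr q| < d.
    by have [f Hf] := fin_all_exists HH; exists f.
  move=> i.
  have [|q] := @rat_in_itvoo R (u 0 i - d) (u 0 i + d); first by lra.
  rewrite in_itv /= => /andP[h1 h2]; exists q; rewrite ltr_norml.
  by apply/andP; split; lra.
pose uq : 'rV[rat]_p := \row_i u' i.
pose q := uq *m K.
pose y := q *m W.
have yzero : forall j, x 0 j = 0 -> y 0 j = 0.
  move=> j xj0'.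
  have : (q *m A) 0 j = 0 by rewrite /q -mulmxA mulmx_ker mulmx0 mxE.
  rewrite /y !mxE => qA; rewrite -[RHS]qA; apply: eq_bigr => l _; rewrite !mxE xj0' eqxx.
  by [].
have ypos : forall j, 0 < x 0 j -> 0 < y 0 j.
  move=> j xjp; rewrite -(ltr_rat R) rmorph0.
  have yE : ratr (y 0 j) = (map_mx ratr uq *m M) 0 j.
    by rewrite /M mulmxA -!map_mxM [RHS]mxE.
  have diff : x 0 j - ratr (y 0 j) = \sum_i (u 0 i - ratr (u' i)) * M i j.
    have -> : x 0 j - ratr (y 0 j) = ((u - map_mx ratr uq) *m M) 0 j.
      by rewrite xM yE mulmxBl !mxE.
    by rewrite mxE; apply: eq_bigr => i _; rewrite !mxE.
  have bound : `|x 0 j - ratr (y 0 j)| < e.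
    rewrite diff; apply: le_lt_trans (ler_norm_sum _ _ _) _.
    apply: (@le_lt_trans _ _ (\sum_i d * `|M i j|)).
      by apply: ler_sum => i _; rewrite normrM ler_wpM2r // ltW // Hu'.
    have TS : \sum_i `|M i j| < S.
      rewrite /S; apply: (le_lt_trans _ (ltr_pwDl ltr01 (lexx _))).
      apply: ler_sum => i _; rewrite (bigD1 j) //= lerDl sumr_ge0 //.
    rewrite -mulr_sumr /d mulrAC ltr_pdivrMr // ltr_pM2l //.
  move: bound; rewrite ltr_norml => /andP[h1 h2]; have := He j xjp; lra.
have yge : forall j, 0 <= y 0 j.
  move=> j; have := xge j; rewrite le_eqVlt => /orP[/eqP/esym/yzero->//|/ypos/ltW//].
pose c l := numq (q 0 l) * \prod_(k | k != l) denq (q 0 k).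
pose D : int := \prod_k denq (q 0 k).
have D0 : 0 < D by rewrite prodr_gt0 // => k _; exact: denq_gt0.
have cE : forall l, (c l)%:~R = q 0 l * D%:~R :> rat.
  move=> l; rewrite /D (bigD1 l) //= /c !intrM.
  by rewrite -{2}[q 0 l]divq_num_den mulrA divfK // intr_eq0 denq_neq0.
pose b := \sum_l c l *: bs l.
have bE : forall j, (b 0 j)%:~R = D%:~R * y 0 j :> rat.
  move=> j; rewrite /b summxE rmorph_sum /y mxE mulr_sumr; apply: eq_bigr => l _.
  rewrite mxE rmorphM /= cE [W l j]mxE; ring.
have Hb : inH b by apply: inH_sum.
have bge : forall j, 0 <= b 0 j.
  by move=> j; rewrite -(ler0z rat) bE mulr_ge0 // ler0z ltW.
have bpos : 0 < b 0 j0 by rewrite -(ltr0z rat) bE mulr_gt0 ?ltr0z ?ypos.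
have bnz : b != 0 by apply/eqP => b0; move: bpos; rewrite b0 mxE ltxx.
have [_ [j bj]] := adm b Hb bnz.
by move: (bge j); rewrite leNgt bj.
Qed.

Theorem lemma3p3 (R : realType) (G : curve_data) :
  admissible G ->
  forall x : 'rV[R]_(nreg G), inH_R x -> x != 0 ->
    (exists j, 0 < x 0 j) /\ (exists j, x 0 j < 0).
Proof.
move=> adm x Hx x0; split; last exact: neg_coord.
have Hx' : inH_R (- x).
  move: Hx => [p [bs [r [Hbs xE]]]]; exists p, bs, (fun l => - r l); split => //.
  by rewrite xE -sumrN; apply: eq_bigr => l _; rewrite scaleNr.
have [|j] := @neg_coord R G adm _ Hx'; first by rewrite oppr_eq0.
by rewrite mxE oppr_lt0; exists j.
Qed.
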